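(* Suppose that $q(z)\le0$ for all $z\in[0,\infty)$ and let $\phi\in X_+$. Then for $w=w^\phi$ one has $w'(t)\le0$ for all $t\ge0$, and there exists $w^\infty=w^\infty(\phi)\in[0,\infty)$ with $w(t)\to w^\infty$ as $t\to\infty$. If moreover $$\forall\,\varepsilon>0\;\exists\,\delta>0\ \text{such that}\ j(\varphi,\psi)\le\varepsilon\ \ \forall\,(\varphi,\psi)\in U_+\ \text{with}\ \|\varphi\|_0\le\delta ,$$ then there is a zero solution, which is stable on $X_+$ in the $C$-norm and in the $C^1$-norm.
   Context: Let $h>0$, $R_-<0$, $I=(R_-,\infty)$, $q:I\to\mathbb{R}$, $\mu>0$, $U=C^1([-h,0],\mathbb{R})\times C^1([-h,0],I)$, $j:U\to\mathbb{R}$, $U_+=C^1([-h,0],\mathbb{R}_+^2)$, $\|\cdot\|_0$ the sup-norm; $x_t(s)=x(t+s)$. Consider $w'(t)=q(v(t))w(t)$, $v'(t)=j(w_t,v_t)-\mu v(t)$, $(w,v)_0=(\varphi,\psi)$. Define $F(\varphi,\psi)=(q(\psi(0))\varphi(0),\,j(\varphi,\psi)-\mu\psi(0))$ and $X_+=\{\phi\in C^1([-h,0],\mathbb{R}_+^2):\phi'(0)=F(\phi)\}\neq\emptyset$. Assume: $j$ is $C^1$ on $U$ with each derivative extending to a linear map on $C([-h,0],\mathbb{R}^2)$ depending continuously on $(\phi,\chi)$; for every bounded $B\subset U_+$ there is $L_B$ with $|j(\phi)-j(\chi)|\le L_B\|\phi-\chi\|_0$ on $B$; $j\ge0$ on $U_+$;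 $j(B_1\times B_2)$ is bounded whenever $B_1\times B_2\subset U_+$ with $B_1$ bounded; $q$ is bounded and $C^1$. Solutions from $X_+$ exist globally and remain nonnegative. *)

(* Defs.v *)
From Stdlib Require Import Reals.
Open Scope R_scope.

(* Functions on [-h,0] are represented as total functions R -> R; only their
   values on [-h,0] matter (see hypothesis j_local). *)
Definition seg (h s : R) : Prop := - h <= s <= 0.

Definition has_deriv_on (D : R -> Prop) (f f' : R -> R) : Prop :=
  forall s, D s -> forall eps, 0 < eps -> exists del, 0 < del /\
    forall y, D y -> Rabs (y - s) < del ->
      Rabs (f y - f s - f' s * (y - s)) <= eps * Rabs (y - s).

Definition cont_on (D : R -> Prop) (g : R -> R) : Prop :=
  forall s, D s -> forall eps, 0 < eps -> exists del, 0 < del /\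
    forall y, D y -> Rabs (y - s) < del -> Rabs (g y - g s) < eps.

Definition C1_on (D : R -> Prop) (f f' : R -> R) : Prop :=
  has_deriv_on D f f' /\ cont_on D f'.

Definition isC1 (h : R) (f : R -> R) : Prop := exists f', C1_on (seg h) f f'.
Definition isC0 (h : R) (f : R -> R) : Prop := cont_on (seg h) f.

Definition norm0_le (h : R) (f : R -> R) (c : R) : Prop :=
  forall s, seg h s -> Rabs (f s) <= c.

(* ||f||_1 <= c, with ||f||_1 = max(||f||_0, ||f'||_0) (equivalent to the
   usual C^1 norm) *)
Definition norm1_le (h : R) (f : R -> R) (c : R) : Prop :=
  exists f', C1_on (seg h) f f' /\
    forall s, seg h s -> Rabs (f s) <= c /\ Rabs (f' s) <= c.

Definition fsub (f g : R -> R) : R -> R := fun s => f s - g s.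
Definition fadd (f g : R -> R) : R -> R := fun s => f s + g s.

Definition in_U (h Rm : R) (phi psi : R -> R) : Prop :=
  isC1 h phi /\ isC1 h psi /\ forall s, seg h s -> Rm < psi s.

Definition in_Uplus (h : R) (phi psi : R -> R) : Prop :=
  isC1 h phi /\ isC1 h psi /\ forall s, seg h s -> 0 <= phi s /\ 0 <= psi s.

Definition in_Xplus (h : R) (q : R -> R) (j : (R -> R) -> (R -> R) -> R)
    (mu : R) (phi phi' psi psi' : R -> R) : Prop :=
  C1_on (seg h) phi phi' /\ C1_on (seg h) psi psi' /\
  (forall s, seg h s -> 0 <= phi s /\ 0 <= psi s) /\
  phi' 0 = q (psi 0) * phi 0 /\
  psi' 0 = j phi psi - mu * psi 0.

Definition shift (x : R -> R) (t : R) : R -> R := fun s => x (t + s).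

Definition is_solution (h Rm : R) (q : R -> R) (j : (R -> R) -> (R -> R) -> R)
    (mu : R) (phi psi w w' v v' : R -> R) : Prop :=
  C1_on (fun s => - h <= s) w w' /\ C1_on (fun s => - h <= s) v v' /\
  (forall s, seg h s -> w s = phi s /\ v s = psi s) /\
  (forall t, - h <= t -> Rm < v t) /\
  (forall t, 0 <= t ->
     w' t = q (v t) * w t /\
     v' t = j (shift w t) (shift v t) - mu * v t).

(* j is a function on U: it only depends on the restriction to [-h,0] *)
Definition j_local (h : R) (j : (R -> R) -> (R -> R) -> R) : Prop :=
  forall phi1 phi2 psi1 psi2,
    (forall s, seg h s -> phi1 s = phi2 s /\ psi1 s = psi2 s) ->
    j phi1 psi1 = j phi2 psi2.

(* j is C^1 on U (Frechet, w.r.t. the C^1 norm, with derivative continuous in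
   operator norm), and each derivative Dj(phi,psi) extends to a linear map
   Dej(phi,psi) on C([-h,0],R^2) such that (p,chi) |-> Dej p chi is continuous
   on U x C([-h,0],R^2). *)
Definition j_C1_ext (h Rm : R) (j : (R -> R) -> (R -> R) -> R) : Prop :=
  exists Dej : (R -> R) -> (R -> R) -> (R -> R) -> (R -> R) -> R,
  (forall phi psi, in_U h Rm phi psi ->
     forall a b c1 c2 d1 d2, isC0 h c1 -> isC0 h c2 -> isC0 h d1 -> isC0 h d2 ->
     Dej phi psi (fun s => a * c1 s + b * d1 s) (fun s => a * c2 s + b * d2 s)
     = a * Dej phi psi c1 c2 + b * Dej phi psi d1 d2) /\
  (forall phi psi, in_U h Rm phi psi ->
     forall eps, 0 < eps -> exists del, 0 < del /\
     forall c1 c2 c, in_U h Rm (fadd phi c1) (fadd psi c2) ->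
       norm1_le h c1 c -> norm1_le h c2 c -> c <= del ->
       Rabs (j (fadd phi c1) (fadd psi c2) - j phi psi - Dej phi psi c1 c2)
         <= eps * c) /\
  (forall phi psi, in_U h Rm phi psi ->
     forall eps, 0 < eps -> exists del, 0 < del /\
     forall phi2 psi2 d, in_U h Rm phi2 psi2 ->
       norm1_le h (fsub phi2 phi) d -> norm1_le h (fsub psi2 psi) d -> d <= del ->
       forall c1 c2 c, norm1_le h c1 c -> norm1_le h c2 c ->
         Rabs (Dej phi2 psi2 c1 c2 - Dej phi psi c1 c2) <= eps * c) /\
  (forall phi psi c1 c2, in_U h Rm phi psi -> isC0 h c1 -> isC0 h c2 ->
     forall eps, 0 < eps -> exists del, 0 < del /\
     forall phi2 psi2 e1 e2 d, in_U h Rm phi2 psi2 -> isC0 h e1 -> isC0 h e2 ->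
       norm1_le h (fsub phi2 phi) d -> norm1_le h (fsub psi2 psi) d ->
       norm0_le h (fsub e1 c1) d -> norm0_le h (fsub e2 c2) d -> d <= del ->
       Rabs (Dej phi2 psi2 e1 e2 - Dej phi psi c1 c2) < eps).

Definition bounded_C1 (h : R) (B : (R -> R) -> (R -> R) -> Prop) : Prop :=
  exists r, forall phi psi, B phi psi -> norm1_le h phi r /\ norm1_le h psi r.

Definition j_loc_Lipschitz (h : R) (j : (R -> R) -> (R -> R) -> R) : Prop :=
  forall B : (R -> R) -> (R -> R) -> Prop,
    (forall phi psi, B phi psi -> in_Uplus h phi psi) -> bounded_C1 h B ->
    exists L, forall phi1 psi1 phi2 psi2 c,
      B phi1 psi1 -> B phi2 psi2 ->
      norm0_le h (fsub phi1 phi2) c -> norm0_le h (fsub psi1 psi2) c ->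
      Rabs (j phi1 psi1 - j phi2 psi2) <= L * c.

Definition j_nonneg (h : R) (j : (R -> R) -> (R -> R) -> R) : Prop :=
  forall phi psi, in_Uplus h phi psi -> 0 <= j phi psi.

Definition j_bounded_prod (h : R) (j : (R -> R) -> (R -> R) -> R) : Prop :=
  forall B1 B2 : (R -> R) -> Prop,
    (forall phi psi, B1 phi -> B2 psi -> in_Uplus h phi psi) ->
    (exists r, forall phi, B1 phi -> norm1_le h phi r) ->
    exists M, forall phi psi, B1 phi -> B2 psi -> Rabs (j phi psi) <= M.

Definition q_bounded (Rm : R) (q : R -> R) : Prop :=
  exists M, forall z, Rm < z -> Rabs (q z) <= M.

Definition q_C1 (Rm : R) (q : R -> R) : Prop :=
  exists q', C1_on (fun z => Rm < z) q q'.

Definition Xplus_nonempty h q j mu : Prop :=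
  exists phi phi' psi psi', in_Xplus h q j mu phi phi' psi psi'.

Definition sol_global h Rm q j mu : Prop :=
  forall phi phi' psi psi', in_Xplus h q j mu phi phi' psi psi' ->
  exists w w' v v', is_solution h Rm q j mu phi psi w w' v v'.

Definition sol_nonneg h Rm q j mu : Prop :=
  forall phi phi' psi psi' w w' v v',
    in_Xplus h q j mu phi phi' psi psi' ->
    is_solution h Rm q j mu phi psi w w' v v' ->
    forall t, - h <= t -> 0 <= w t /\ 0 <= v t.

(* Main.v *)
Require Import Defs.
From Stdlib Require Import Reals Lra Classical.
Open Scope R_scope.


Lemma interior_deriv (lo : R) f f' x :
  has_deriv_on (fun s => lo <= s) f f' -> lo < x -> derivable_pt_lim f x (f' x).
Proof.
  intros Hd Hx eps He.
  destruct (Hd x ltac:(lra) (eps/2) ltac:(lra)) as [del [Hdel H]].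
  assert (Hp : 0 < Rmin del (x - lo)) by (apply Rmin_glb_lt; lra).
  exists (mkposreal _ Hp). intros k Hk Hka. simpl in Hka.
  assert (Hk1 : Rabs k < del) by (eapply Rlt_le_trans; [exact Hka| apply Rmin_l]).
  assert (Hk2 : Rabs k < x - lo) by (eapply Rlt_le_trans; [exact Hka| apply Rmin_r]).
  assert (Hy : lo <= x + k) by (destruct (Rabs_def2 _ _ Hk2); lra).
  specialize (H (x+k) Hy). replace (x + k - x) with k in H by ring.
  specialize (H Hk1).
  assert (Hkp : 0 < Rabs k) by (apply Rabs_pos_lt; auto).
  assert (E : (f (x + k) - f x) / k - f' x = (f (x + k) - f x - f' x * k) * / k)
    by (field; auto).
  rewrite E, Rabs_mult, Rabs_inv.
  apply (Rmult_lt_reg_r (Rabs k)); auto.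
  rewrite Rmult_assoc, Rinv_l by lra. nra.
Qed.

Lemma noninc (f f' : R -> R) a b :
  a <= b ->
  (forall c, a <= c <= b -> derivable_pt_lim f c (f' c)) ->
  (forall c, a <= c <= b -> f' c <= 0) -> f b <= f a.
Proof.
  intros Hab Hd Hn. destruct (Req_dec a b) as [->|Hne]; [lra|].
  destruct (MVT_cor2 f f' a b ltac:(lra) Hd) as [c [Hc1 Hc2]].
  assert (f' c <= 0) by (apply Hn; lra). nra.
Qed.

Lemma noninc_D (lo : R) f f' a b :
  lo < a -> a <= b -> has_deriv_on (fun s => lo <= s) f f' ->
  (forall c, a <= c <= b -> f' c <= 0) -> f b <= f a.
Proof.
  intros Ha Hab Hd Hn. apply (noninc f f'); auto.
  intros c Hc. apply (interior_deriv lo); auto; lra.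
Qed.

Lemma deriv_unique h f g f1 g1 s :
  0 < h -> has_deriv_on (seg h) f f1 -> has_deriv_on (seg h) g g1 ->
  (forall s, seg h s -> f s = g s) -> seg h s -> f1 s = g1 s.
Proof.
  intros hh Hf Hg Heq Hs.
  assert (Hall : forall eps, 0 < eps -> Rabs (f1 s - g1 s) <= 2 * eps).
  { intros eps He.
    destruct (Hf s Hs eps He) as [d1 [Hd1 H1]].
    destruct (Hg s Hs eps He) as [d2 [Hd2 H2]].
    set (k := Rmin (Rmin d1 d2) h / 2).
    assert (Hk0 : 0 < Rmin (Rmin d1 d2) h) by (repeat apply Rmin_glb_lt; lra).
    assert (Hk1 : Rmin (Rmin d1 d2) h <= d1) by (eapply Rle_trans; [apply Rmin_l| apply Rmin_l]).
    assert (Hk2 : Rmin (Rmin d1 d2) h <= d2) by (eapply Rle_trans; [apply Rmin_l| apply Rmin_r]).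
    assert (Hk3 : Rmin (Rmin d1 d2) h <= h) by apply Rmin_r.
    unfold seg in Hs.
    assert (exists y, seg h y /\ 0 < Rabs (y - s) < Rmin d1 d2 /\ Rabs (y - s) <= d1 /\ Rabs (y-s) <= d2 /\ Rabs (y-s) < d1 /\ Rabs (y-s) < d2) as [y [Hy [Hys [_ [_ [Hy1 Hy2]]]]]].
    { destruct (Rle_dec (-h) (s - k)).
      - exists (s - k). replace (s - k - s) with (-k) by ring. rewrite Rabs_Ropp, Rabs_pos_eq by (unfold k; lra).
        unfold seg, k in *. repeat split; try lra.
        + assert (Rmin d1 d2 <= d1) by apply Rmin_l. assert (Rmin d1 d2 <= d2) by apply Rmin_r.
          assert (Rmin (Rmin d1 d2) h <= Rmin d1 d2) by apply Rmin_l. lra.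
      - exists (s + k). replace (s + k - s) with k by ring. rewrite Rabs_pos_eq by (unfold k; lra).
        unfold seg, k in *. repeat split; try lra.
        assert (Rmin (Rmin d1 d2) h <= Rmin d1 d2) by apply Rmin_l. lra. }
    specialize (H1 y Hy Hy1). specialize (H2 y Hy Hy2).
    rewrite (Heq y Hy), (Heq s (conj (proj1 Hs) (proj2 Hs))) in H1.
    assert (E : (f1 s - g1 s) * (y - s) =
      (g y - g s - g1 s * (y - s)) - (g y - g s - f1 s * (y - s))) by ring.
    assert (Rabs ((f1 s - g1 s) * (y - s)) <= 2 * eps * Rabs (y - s)).
    { rewrite E. eapply Rle_trans; [apply Rabs_triang|]. rewrite Rabs_Ropp. lra. }
    rewrite Rabs_mult in H.
    destruct Hys as [Hys _].
    apply (Rmult_le_reg_r (Rabs (y - s))); auto. }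
  destruct (Req_dec (f1 s - g1 s) 0) as [E|E]; [lra|].
  assert (Hp : 0 < Rabs (f1 s - g1 s)) by (apply Rabs_pos_lt; auto).
  specialize (Hall (Rabs (f1 s - g1 s) / 4) ltac:(lra)). lra.
Qed.


Lemma deriv_restrict (D E : R -> Prop) f f' :
  (forall s, E s -> D s) -> has_deriv_on D f f' -> has_deriv_on E f f'.
Proof.
  intros HED Hd s Hs eps He. destruct (Hd s (HED s Hs) eps He) as [d [Hd0 H]].
  exists d; split; auto.
Qed.

Lemma shift_C1 h f f' t : 0 <= t -> C1_on (fun s => - h <= s) f f' ->
  C1_on (seg h) (shift f t) (shift f' t).
Proof.
  intros Ht [Hd Hc]. unfold seg, shift. split.
  - intros s Hs eps He. destruct (Hd (t+s) ltac:(lra) eps He) as [d [Hd0 H]].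
    exists d; split; auto. intros y Hy Hys.
    specialize (H (t+y) ltac:(lra)). replace (t + y - (t + s)) with (y - s) in H by ring.
    auto.
  - intros s Hs eps He. destruct (Hc (t+s) ltac:(lra) eps He) as [d [Hd0 H]].
    exists d; split; auto. intros y Hy Hys.
    specialize (H (t+y) ltac:(lra)). replace (t + y - (t + s)) with (y - s) in H by ring.
    auto.
Qed.

Lemma gderiv (v : R -> R) v' c mu x :
  derivable_pt_lim v x (v' x) ->
  derivable_pt_lim (fun t => (v t - c) * exp (mu * t)) x
     (exp (mu * x) * (v' x + mu * (v x - c))).
Proof.
  intros Hv.
  assert (H1 : derivable_pt_lim (fun t => v t - c) x (v' x - 0)).
  { apply (derivable_pt_lim_minus v (fct_cte c)); auto. apply derivable_pt_lim_const. }
  assert (H2 : derivable_pt_lim (fun t => exp (mu * t)) x (exp (mu * x) * (mu * 1))).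
  { apply (derivable_pt_lim_comp (fun t => mu * t) exp).
    - apply (derivable_pt_lim_scal id). apply derivable_pt_lim_id.
    - apply derivable_pt_lim_exp. }
  pose proof (derivable_pt_lim_mult _ _ _ _ _ H1 H2) as H.
  replace (exp (mu * x) * (v' x + mu * (v x - c))) with
    ((v' x - 0) * exp (mu * x) + (v x - c) * (exp (mu * x) * (mu * 1))) by ring.
  exact H.
Qed.

Lemma mono_limit (w : R -> R) :
  (forall a b, 0 <= a -> a <= b -> w b <= w a) -> (forall t, 0 <= t -> 0 <= w t) ->
  exists winf, 0 <= winf /\
    forall eps, 0 < eps -> exists T, forall t, T <= t -> Rabs (w t - winf) < eps.
Proof.
  intros Hm Hp.
  set (E := fun x => exists t, 0 <= t /\ x = - w t).
  assert (Hb : bound E).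
  { exists 0. intros x [t [Ht ->]]. specialize (Hp t Ht). lra. }
  assert (Hne : exists x, E x) by (exists (- w 0); exists 0; split; lra).
  destruct (completeness E Hb Hne) as [l [Hub Hlub]].
  assert (Hl0 : l <= 0).
  { apply Hlub. intros x [t [Ht ->]]. specialize (Hp t Ht). lra. }
  exists (- l). split; [lra|].
  intros eps He.
  assert (exists t0, 0 <= t0 /\ - w t0 > l - eps) as [t0 [Ht0 Hw0]].
  { apply NNPP. intro Hn.
    assert (l <= l - eps); [|lra].
    apply Hlub. intros x [t [Ht ->]].
    apply Rnot_gt_le. intro Hc. apply Hn. exists t; split; auto. }
  exists t0. intros t Ht.
  assert (w t <= w t0) by (apply Hm; lra).
  assert (- w t <= l) by (apply Hub; exists t; split; [lra|reflexivity]).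
  rewrite Rabs_pos_eq by lra. lra.
Qed.


Lemma C1_const (D : R -> Prop) (c : R) : C1_on D (fun _ => c) (fun _ => 0).
Proof.
  split.
  - intros s _ eps He. exists 1. split; [lra|]. intros y _ _.
    replace (c - c - 0 * (y - s)) with 0 by ring. rewrite Rabs_R0.
    pose proof (Rabs_pos (y - s)). nra.
  - intros s _ eps He. exists 1. split; [lra|]. intros y _ _.
    replace (0 - 0) with 0 by ring. rewrite Rabs_R0. lra.
Qed.


Lemma part1 (h Rm mu : R) (q : R -> R) (j : (R -> R) -> (R -> R) -> R) (hh : 0 < h) (hnn : sol_nonneg h Rm q j mu) (hq : forall z, 0 <= z -> q z <= 0) phi phi' psi psi' w w' v v' :
  in_Xplus h q j mu phi phi' psi psi' ->
  is_solution h Rm q j mu phi psi w w' v v' ->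
  (forall t, 0 <= t -> w' t <= 0) /\
  (forall a b, 0 <= a -> a <= b -> w b <= w a).
Proof.
  intros HX HS.
  pose proof (hnn _ _ _ _ _ _ _ _ HX HS) as Hn.
  destruct HS as [[Hwd Hwc] [[Hvd Hvc] [Hinit [HRm Heq]]]].
  assert (Hw' : forall t, 0 <= t -> w' t <= 0).
  { intros t Ht. rewrite (proj1 (Heq t Ht)).
    destruct (Hn t ltac:(lra)) as [H1 H2]. pose proof (hq _ H2). nra. }
  split; auto.
  intros a b Ha Hab. apply (noninc_D (-h) w w'); auto; try lra.
  intros c Hc. apply Hw'. lra.
Qed.

Lemma wbound (h Rm mu : R) (q : R -> R) (j : (R -> R) -> (R -> R) -> R) (hh : 0 < h) (hnn : sol_nonneg h Rm q j mu) (hq : forall z, 0 <= z -> q z <= 0) phi phi' psi psi' w w' v v' del :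
  in_Xplus h q j mu phi phi' psi psi' ->
  is_solution h Rm q j mu phi psi w w' v v' ->
  (forall s, seg h s -> Rabs (phi s) < del) ->
  forall t, - h <= t -> Rabs (w t) < del.
Proof.
  intros HX HS Hb t Ht.
  destruct (part1 h Rm mu q j hh hnn hq _ _ _ _ _ _ _ _ HX HS) as [_ Hm].
  pose proof (hnn _ _ _ _ _ _ _ _ HX HS) as Hn.
  destruct HS as [_ [_ [Hinit _]]].
  destruct (Rle_dec t 0).
  - rewrite (proj1 (Hinit t ltac:(unfold seg; lra))). apply Hb. unfold seg; lra.
  - assert (w t <= w 0) by (apply Hm; lra).
    assert (H0 : seg h 0) by (unfold seg; lra).
    pose proof (Hb 0 H0) as Hb0. rewrite <- (proj1 (Hinit 0 H0)) in Hb0.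
    destruct (Hn t Ht). rewrite Rabs_pos_eq by lra.
    pose proof (Rle_abs (w 0)). lra.
Qed.

Lemma traj_Uplus (h Rm mu : R) (q : R -> R) (j : (R -> R) -> (R -> R) -> R) (hnn : sol_nonneg h Rm q j mu) phi phi' psi psi' w w' v v' t :
  in_Xplus h q j mu phi phi' psi psi' ->
  is_solution h Rm q j mu phi psi w w' v v' -> 0 <= t ->
  in_Uplus h (shift w t) (shift v t).
Proof.
  intros HX HS Ht.
  pose proof (hnn _ _ _ _ _ _ _ _ HX HS) as Hn.
  destruct HS as [Hw [Hv _]].
  split; [exists (shift w' t); apply shift_C1; auto|].
  split; [exists (shift v' t); apply shift_C1; auto|].
  intros s Hs. unfold shift, seg in *. apply Hn. lra.
Qed.

Lemma vbound (h Rm mu : R) (q : R -> R) (j : (R -> R) -> (R -> R) -> R) (hh : 0 < h) (hnn : sol_nonneg h Rm q j mu) phi phi' psi psi' w w' v v' c0 :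
  in_Xplus h q j mu phi phi' psi psi' ->
  is_solution h Rm q j mu phi psi w w' v v' ->
  (forall t, 0 <= t -> j (shift w t) (shift v t) <= mu * c0) ->
  (forall s, seg h s -> Rabs (psi s) < c0) ->
  forall t, - h <= t -> Rabs (v t) < c0.
Proof.
  intros HX HS Hj Hb t Ht.
  pose proof (hnn _ _ _ _ _ _ _ _ HX HS) as Hn.
  destruct HS as [_ [[Hvd _] [Hinit [_ Heq]]]].
  destruct (Rle_dec t 0).
  - rewrite (proj2 (Hinit t ltac:(unfold seg; lra))). apply Hb. unfold seg; lra.
  - assert (H0 : seg h 0) by (unfold seg; lra).
    assert (Hg : (v t - c0) * exp (mu * t) <= (v 0 - c0) * exp (mu * 0)).
    { apply (noninc (fun t => (v t - c0) * exp (mu * t))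
                    (fun x => exp (mu * x) * (v' x + mu * (v x - c0)))); [lra| |].
      - intros c Hc. apply gderiv. apply (interior_deriv (-h)); auto. lra.
      - intros c Hc. rewrite (proj2 (Heq c ltac:(lra))).
        specialize (Hj c ltac:(lra)). pose proof (exp_pos (mu * c)). nra. }
    rewrite Rmult_0_r, exp_0, Rmult_1_r in Hg.
    pose proof (Hb 0 H0) as Hb0. rewrite <- (proj2 (Hinit 0 H0)) in Hb0.
    pose proof (Rle_abs (v 0)). pose proof (exp_pos (mu * t)).
    destruct (Hn t Ht). rewrite Rabs_pos_eq by lra.
    assert (v t - c0 < 0) by nra. lra.
Qed.


Theorem lemma10 (h Rm mu : R) (q : R -> R) (j : (R -> R) -> (R -> R) -> R)
  (hh : 0 < h) (hRm : Rm < 0) (hmu : 0 < mu)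
  (hjloc : j_local h j) (hjC1 : j_C1_ext h Rm j)
  (hjLip : j_loc_Lipschitz h j) (hjnn : j_nonneg h j)
  (hjbd : j_bounded_prod h j)
  (hqbd : q_bounded Rm q) (hqC1 : q_C1 Rm q)
  (hX : Xplus_nonempty h q j mu)
  (hglob : sol_global h Rm q j mu) (hnn : sol_nonneg h Rm q j mu)
  (hq : forall z, 0 <= z -> q z <= 0) :
  (forall phi phi' psi psi' w w' v v',
     in_Xplus h q j mu phi phi' psi psi' ->
     is_solution h Rm q j mu phi psi w w' v v' ->
     (forall t, 0 <= t -> w' t <= 0) /\
     exists winf, 0 <= winf /\
       forall eps, 0 < eps -> exists T, forall t, T <= t ->
         Rabs (w t - winf) < eps)
  /\
  ((forall eps, 0 < eps -> exists del, 0 < del /\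
      forall phi psi, in_Uplus h phi psi -> norm0_le h phi del ->
        j phi psi <= eps) ->
   (* zero solution *)
   (in_Xplus h q j mu (fun _ => 0) (fun _ => 0) (fun _ => 0) (fun _ => 0) /\
    is_solution h Rm q j mu (fun _ => 0) (fun _ => 0)
      (fun _ => 0) (fun _ => 0) (fun _ => 0) (fun _ => 0)) /\
   (* stability on X_+ in the C-norm *)
   (forall eps, 0 < eps -> exists del, 0 < del /\
     forall phi phi' psi psi' w w' v v',
       in_Xplus h q j mu phi phi' psi psi' ->
       is_solution h Rm q j mu phi psi w w' v v' ->
       (forall s, seg h s -> Rabs (phi s) < del /\ Rabs (psi s) < del) ->
       forall t, 0 <= t -> forall s, seg h s ->
         Rabs (w (t + s)) < eps /\ Rabs (v (t + s)) < eps) /\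
   (* stability on X_+ in the C^1-norm *)
   (forall eps, 0 < eps -> exists del, 0 < del /\
     forall phi phi' psi psi' w w' v v',
       in_Xplus h q j mu phi phi' psi psi' ->
       is_solution h Rm q j mu phi psi w w' v v' ->
       (forall s, seg h s -> Rabs (phi s) < del /\ Rabs (psi s) < del /\
                             Rabs (phi' s) < del /\ Rabs (psi' s) < del) ->
       forall t, 0 <= t -> forall s, seg h s ->
         Rabs (w (t + s)) < eps /\ Rabs (v (t + s)) < eps /\
         Rabs (w' (t + s)) < eps /\ Rabs (v' (t + s)) < eps)).
Proof.
  split.
  { intros phi phi' psi psi' w w' v v' HX HS.
    destruct (part1 h Rm mu q j hh hnn hq _ _ _ _ _ _ _ _ HX HS) as [H1 H2].
    split; auto. apply mono_limit; auto.
    intros t Ht. apply (hnn _ _ _ _ _ _ _ _ HX HS). lra. }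
  intros Hsmall.
  assert (HU0 : in_Uplus h (fun _ => 0) (fun _ => 0)).
  { split; [exists (fun _ => 0); apply C1_const|].
    split; [exists (fun _ => 0); apply C1_const|]. intros; lra. }
  assert (Hj00 : j (fun _ => 0) (fun _ => 0) = 0).
  { pose proof (hjnn _ _ HU0).
    destruct (Req_dec (j (fun _ => 0) (fun _ => 0)) 0) as [E|E]; auto.
    destruct (Hsmall (j (fun _ => 0) (fun _ => 0) / 2) ltac:(lra)) as [d [Hd Hj]].
    specialize (Hj _ _ HU0). assert (norm0_le h (fun _ => 0) d).
    { intros s _. rewrite Rabs_R0. lra. }
    specialize (Hj H0). lra. }
  assert (Htj : forall e, 0 < e -> exists d, 0 < d /\
     forall phi phi' psi psi' w w' v v',
       in_Xplus h q j mu phi phi' psi psi' ->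
       is_solution h Rm q j mu phi psi w w' v v' ->
       (forall s, seg h s -> Rabs (phi s) < d) ->
       forall t, 0 <= t -> j (shift w t) (shift v t) <= e).
  { intros e He. destruct (Hsmall e He) as [d [Hd Hj]]. exists d. split; auto.
    intros phi phi' psi psi' w w' v v' HX HS Hb t Ht.
    apply Hj. apply (traj_Uplus h Rm mu q j hnn phi phi' psi psi' w w' v v' t HX HS Ht).
    intros s Hs. unfold shift, seg in *. left.
    apply (wbound h Rm mu q j hh hnn hq phi phi' psi psi' w w' v v' d HX HS Hb). lra. }
  split.
  { split.
    - split; [apply C1_const|]. split; [apply C1_const|]. split; [intros; lra|].
      split; [ring|]. rewrite Hj00. ring.
    - split; [apply C1_const|]. split; [apply C1_const|]. split; [auto|].
      split; [intros; lra|]. intros t Ht. split; [ring|].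
      change (0 = j (fun _ => 0) (fun _ => 0) - mu * 0). rewrite Hj00. ring. }
  split.
  { intros eps He.
    destruct (Htj (mu * (eps/2)) ltac:(nra)) as [dj [Hdj Hj]].
    exists (Rmin (eps/2) dj). split; [apply Rmin_glb_lt; lra|].
    intros phi phi' psi psi' w w' v v' HX HS Hb t Ht s Hs.
    pose proof (Rmin_l (eps/2) dj). pose proof (Rmin_r (eps/2) dj).
    unfold seg in Hs.
    split.
    - assert (Rabs (w (t+s)) < Rmin (eps/2) dj); [|lra].
      apply (wbound h Rm mu q j hh hnn hq phi phi' psi psi' w w' v v'); auto; [|lra].
      intros; apply Hb; auto.
    - assert (Rabs (v (t+s)) < eps/2); [|lra].
      apply (vbound h Rm mu q j hh hnn phi phi' psi psi' w w' v v'); auto; [| |lra].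
      + intros t0 Ht0. apply (Hj phi phi' psi psi' w w' v v'); auto.
        intros s0 Hs0. specialize (Hb s0 Hs0). lra.
      + intros s0 Hs0. specialize (Hb s0 Hs0). lra. }
  { intros eps He.
    destruct hqbd as [Mq HMq].
    assert (HMq0 : 0 <= Mq) by (pose proof (HMq 0 hRm); pose proof (Rabs_pos (q 0)); lra).
    set (c0 := Rmin (eps/2) (eps/(2*mu))).
    assert (Hc0a : c0 <= eps/2) by apply Rmin_l.
    assert (Hc0b : c0 <= eps/(2*mu)) by apply Rmin_r.
    assert (Hc0 : 0 < c0) by (apply Rmin_glb_lt; [lra| apply Rdiv_lt_0_compat; lra]).
    assert (Hmc : mu * c0 <= eps/2).
    { assert (mu * (eps/(2*mu)) = eps/2) by (field; lra). nra. }
    destruct (Htj (mu * c0) ltac:(nra)) as [dj [Hdj Hj]].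
    set (del := Rmin (Rmin c0 dj) (eps/(Mq+1))).
    assert (Hd1 : del <= Rmin c0 dj) by apply Rmin_l.
    assert (Hd2 : del <= eps/(Mq+1)) by apply Rmin_r.
    assert (Hd3 : Rmin c0 dj <= c0) by apply Rmin_l.
    assert (Hd4 : Rmin c0 dj <= dj) by apply Rmin_r.
    assert (Hdel : 0 < del).
    { apply Rmin_glb_lt; [apply Rmin_glb_lt; lra| apply Rdiv_lt_0_compat; lra]. }
    exists del. split; auto.
    intros phi phi' psi psi' w w' v v' HX HS Hb t Ht s Hs.
    assert (Hjt : forall t0, 0 <= t0 -> j (shift w t0) (shift v t0) <= mu * c0).
    { intros t0 Ht0. apply (Hj phi phi' psi psi' w w' v v'); auto.
      intros s0 Hs0. specialize (Hb s0 Hs0). lra. }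
    assert (Hw : forall t0, -h <= t0 -> Rabs (w t0) < del).
    { apply (wbound h Rm mu q j hh hnn hq phi phi' psi psi' w w' v v'); auto.
      intros s0 Hs0; apply Hb; auto. }
    assert (Hv : forall t0, -h <= t0 -> Rabs (v t0) < c0).
    { apply (vbound h Rm mu q j hh hnn phi phi' psi psi' w w' v v'); auto.
      intros s0 Hs0. specialize (Hb s0 Hs0). lra. }
    unfold seg in Hs.
    pose proof (hnn _ _ _ _ _ _ _ _ HX HS) as Hn.
    assert (HX' := HX). assert (HS' := HS).
    destruct HX' as [[Hpd _] [[Hqd _] _]].
    destruct HS' as [[Hwd _] [[Hvd _] [Hinit [HRmv Heq]]]].
    pose proof (Hw (t+s) ltac:(lra)). pose proof (Hv (t+s) ltac:(lra)).
    split; [lra|]. split; [lra|].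
    destruct (Rle_dec (t+s) 0) as [Hle|Hgt].
    - assert (Hseg : seg h (t+s)) by (unfold seg; lra).
      assert (E1 : w' (t+s) = phi' (t+s)).
      { apply (deriv_unique h w phi); auto.
        - apply (deriv_restrict (fun s => -h <= s)); auto. unfold seg; intros; lra.
        - intros; apply Hinit; auto. }
      assert (E2 : v' (t+s) = psi' (t+s)).
      { apply (deriv_unique h v psi); auto.
        - apply (deriv_restrict (fun s => -h <= s)); auto. unfold seg; intros; lra.
        - intros; apply Hinit; auto. }
      rewrite E1, E2. destruct (Hb _ Hseg) as [_ [_ [Ha Hc]]]. lra.
    - assert (Ht0 : 0 <= t+s) by lra.
      destruct (Heq _ Ht0) as [E1 E2]. rewrite E1, E2. split.
      + rewrite Rabs_mult.
        pose proof (HMq (v (t+s)) (HRmv (t+s) ltac:(lra))).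
        pose proof (Rabs_pos (q (v (t+s)))). pose proof (Rabs_pos (w (t+s))).
        assert (Rabs (q (v (t + s))) * Rabs (w (t + s)) <= Mq * del) by
          (apply Rmult_le_compat; lra).
        assert (Mq * (eps/(Mq+1)) < eps).
        { apply (Rmult_lt_reg_r (Mq+1)); [lra|].
          replace (Mq * (eps / (Mq + 1)) * (Mq + 1)) with (Mq * eps) by (field; lra). nra. }
        nra.
      + pose proof (hjnn _ _ (traj_Uplus h Rm mu q j hnn phi phi' psi psi' w w' v v' _ HX HS Ht0)).
        pose proof (Hjt _ Ht0). destruct (Hn (t+s) ltac:(lra)) as [_ Hv0].
        rewrite Rabs_pos_eq in H0 by lra.
        apply Rabs_def1; nra. }
Qed.
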